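(* Let $K$ be a field, $c\in K\setminus\{0\}$, and let $(x_j)_{j\in\mathbb{Z}}$ be indeterminates; define $x'_{2l}=x_{2l}$ and $x'_{2l+1}=-x_{2l+1}$ for all $l\in\mathbb{Z}$. Let $k\ge0$ and $j\in\mathbb{Z}$. (a) If $k\equiv0\pmod4$, then $P_k^{-c}(x'_j,\dots,x'_{j+k-1})=P_k^c(x_j,\dots,x_{j+k-1})$. (b) If $k\equiv1\pmod4$, then $P_k^{-c}(x'_j,\dots,x'_{j+k-1})=P_k^c(x_j,\dots,x_{j+k-1})$ for $j$ even and $=-P_k^c(x_j,\dots,x_{j+k-1})$ for $j$ odd. (c) If $k\equiv2\pmod4$, then $P_k^{-c}(x'_j,\dots,x'_{j+k-1})=-P_k^c(x_j,\dots,x_{j+k-1})$. (d) If $k\equiv3\pmod4$, then $P_k^{-c}(x'_j,\dots,x'_{j+k-1})=-P_k^c(x_j,\dots,x_{j+k-1})$ for $j$ even and $=P_k^c(x_j,\dots,x_{j+k-1})$ for $j$ odd.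
   Context: For a nonzero $a\in K$, the $a$-continuant polynomials $P_k^a$ ($k\ge -1$) are defined by $P_{-1}^a=0$, $P_0^a=1$ and, for $k\ge1$, $P_k^a(y_1,\dots,y_k)=y_kP_{k-1}^a(y_1,\dots,y_{k-1})+aP_{k-2}^a(y_1,\dots,y_{k-2})$, applied to any sequence of consecutive variables. *)

(* Defs.v *)
From HB Require Import structures.
From mathcomp Require Import all_boot all_algebra.
From mathcomp Require Import mpoly.
Set Implicit Arguments. Unset Strict Implicit. Unset Printing Implicit Defensive.
Import GRing.Theory.
Local Open Scope ring_scope.

(* a-continuant: cont a y k = P_k^a(y 0, ..., y (k-1)),
   P_0 = 1, P_1 = y_1 (= y_1 * P_0 + a * P_{-1}),
   P_{k+2} = y_{k+2} P_{k+1} + a P_k. *)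
Fixpoint cont (R : comRingType) (a : R) (y : nat -> R) (k : nat) : R :=
  match k with
  | 0 => 1
  | 1 => y 0%N
  | (k'.+1 as k1).+1 => y k1 * cont a y k1 + a * cont a y k'
  end.

Definition zodd (m : int) : bool := odd `|m|%N.

(* The indeterminates x_j, ..., x_{j+k-1} realised as the variables of
   the polynomial ring K[X_0, ..., X_{k-1}]: x_{j+i} is 'X_i. *)
Definition xvar (K : fieldType) (k i : nat) : {mpoly K[k]} :=
  if insub i is Some o then 'X_o else 0.

Definition xpvar (K : fieldType) (k : nat) (j : int) (i : nat) : {mpoly K[k]} :=
  if zodd (j + i%:Z) then - xvar K k i else xvar K k i.

(* Main.v *)
Require Import Defs.
From HB Require Import structures.
From mathcomp Require Import all_boot all_algebra.
From mathcomp Require Import mpoly ring zify.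
Import GRing.Theory.
Local Open Scope ring_scope.

Section Gen.
Variable (R : comRingType) (a s : R) (hs : s * s = 1) (y y' : nat -> R).
Hypothesis hy : forall i, y' i = s * (-1) ^+ i * y i.

Lemma sqN1 : (-1) ^+ 2 = 1 :> R. Proof. by rewrite expr2 mulrNN mulr1. Qed.

Fixpoint sig (n : nat) : R := if n is m.+1 then s * (-1) ^+ m * sig m else 1.

Lemma sig4 m : sig (m + 4) = sig m.
Proof.
rewrite addnC /=.
have -> : s * (-1) ^+ (3 + m) * (s * (-1) ^+ (2 + m) * (s * (-1) ^+ (1 + m) * (s * (-1) ^+ m * sig m)))
  = (s * s) * (s * s) * ((-1) ^+ (3 + m) * (-1) ^+ (2 + m) * (-1) ^+ (1 + m) * (-1) ^+ m) * sig m by ring.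
rewrite hs !mul1r -!exprD.
have -> : (3 + m + (2 + m) + (1 + m) + m = 2 * (2 * m + 3))%N by lia.
by rewrite exprM sqN1 expr1n mul1r.
Qed.

Lemma sig_mod n : sig n = sig (n %% 4).
Proof.
rewrite {1}(divn_eq n 4); elim: (n %/ 4)%N => [|q IH]; first by rewrite mul0n add0n.
by rewrite mulSn -addnA addnC sig4.
Qed.

Lemma cont_SS (b : R) z n : cont b z n.+2 = z n.+1 * cont b z n.+1 + b * cont b z n.
Proof. by []. Qed.

Lemma cont_gen n : cont (- a) y' n = sig n * cont a y n /\
   cont (- a) y' n.+1 = sig n.+1 * cont a y n.+1.
Proof.
elim: n => [|n [IH1 IH2]].
  by rewrite /= mulr1 hy expr0 mulr1.
split => //.
rewrite !cont_SS IH1 IH2 hy [sig n.+2]/= [sig n.+1]/=.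
have e : (-1) ^+ n.+1 * (-1) ^+ n = - 1 :> R.
  rewrite -exprD (_ : (n.+1 + n = 2 * n + 1)%N); last by lia.
  by rewrite exprD exprM sqN1 expr1n mul1r expr1.
transitivity (s * s * ((-1) ^+ n.+1 * (-1) ^+ n) * sig n * y n.+1 * cont a y n.+1 - a * (sig n * cont a y n)).
  ring.
rewrite hs e.
symmetry.
transitivity (s * s * ((-1) ^+ n.+1 * (-1) ^+ n) * sig n * y n.+1 * cont a y n.+1
   + (s * s) * ((-1) ^+ n.+1 * (-1) ^+ n) * sig n * a * cont a y n).
  ring.
rewrite hs e; ring.
Qed.
End Gen.

Lemma zoddS m : zodd (m + 1) = ~~ zodd m.
Proof.
rewrite /zodd; case: m => n /=.
  by rewrite addn1 /=.
rewrite NegzE.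
have -> : - (Posz n.+1) + 1 = - Posz n by rewrite -addn1 PoszD opprD addrK.
by rewrite abszN /= negbK.
Qed.

Theorem mainTheorem6 (K : fieldType) (c : K) (hc : c != 0) (k : nat) (j : int) :
  let P := cont (- c%:MP) (xpvar K k j) k in
  let Q := cont (c%:MP) (xvar K k) k in
  [/\ (k %% 4 = 0)%N -> P = Q,
      (k %% 4 = 1)%N -> P = (if zodd j then - Q else Q),
      (k %% 4 = 2)%N -> P = - Q
    & (k %% 4 = 3)%N -> P = (if zodd j then Q else - Q)].
Proof.
set s : {mpoly K[k]} := if zodd j then -1 else 1.
have hs : s * s = 1 by rewrite /s; case: ifP; rewrite ?mulrNN mulr1.
have hy : forall i, xpvar K k j i = s * (-1) ^+ i * xvar K k i.
  move=> i; rewrite /xpvar /s.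
  have -> : zodd (j + i%:Z) = zodd j (+) odd i.
    elim: i => [|i IH]; first by rewrite addr0 addbF.
    by rewrite -addn1 PoszD addrA zoddS IH oddD /= addbT addbN.
  rewrite -signr_odd.
  case: (zodd j); case: (odd i) => /=; rewrite ?expr0 ?expr1 ?mulr1 ?mul1r ?mulrNN ?mulN1r ?opprK; ring.
move=> P Q.
have := (@cont_gen _ (c%:MP) _ hs _ _ hy k).1; rewrite -/P -/Q (@sig_mod _ _ hs) => ->.
split => ->; rewrite /s /=; case: (zodd j); ring.
Qed.
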